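(* Let $\sigma:\mathbb{R}\to\mathbb{R}$ be an increasing odd homeomorphism. If $A\subset\mathbb{R}^2$ is invariant under $h_\sigma$ and $v_\sigma$ (i.e. $h_\sigma^{\pm1}(A)\subset A$ and $v_\sigma^{\pm1}(A)\subset A$), then $A_+=A\cap\mathbb{R}_{\geq0}^2$ satisfies $E_\sigma^{-1}(A_+)=A_+$.
   Context: $h_\sigma(x,y)=(x+\sigma^{-1}(y),y)$, $v_\sigma(x,y)=(x,\sigma(x)+y)$. The generalized Euclidean algorithm is $E_\sigma:\mathbb{R}_{\geq0}^2\to\mathbb{R}_{\geq0}^2$, $E_\sigma(x,y)=(x-\sigma^{-1}(y),y)$ if $y<\sigma(x)$ and $E_\sigma(x,y)=(x,y-\sigma(x))$ if $y\geq\sigma(x)$. *)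

(* Defs.v *)
From Stdlib Require Import Reals.
Open Scope R_scope.

Definition increasing_odd_homeo (sigma sinv : R -> R) : Prop :=
  (forall x y, x < y -> sigma x < sigma y) /\
  (forall x, sigma (- x) = - sigma x) /\
  (forall x, continuity_pt sigma x) /\
  (forall x, continuity_pt sinv x) /\
  (forall x, sinv (sigma x) = x) /\
  (forall y, sigma (sinv y) = y).

Definition h_sig (sigma sinv : R -> R) (p : R * R) : R * R :=
  (fst p + sinv (snd p), snd p).
Definition h_sig_inv (sigma sinv : R -> R) (p : R * R) : R * R :=
  (fst p - sinv (snd p), snd p).
Definition v_sig (sigma sinv : R -> R) (p : R * R) : R * R :=
  (fst p, sigma (fst p) + snd p).
Definition v_sig_inv (sigma sinv : R -> R) (p : R * R) : R * R :=
  (fst p, snd p - sigma (fst p)).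

(* Generalized Euclidean algorithm on R_{>=0}^2 (given as a total formula). *)
Definition E_sig (sigma sinv : R -> R) (p : R * R) : R * R :=
  let (x, y) := p in
  if Rlt_dec y (sigma x) then (x - sinv y, y) else (x, y - sigma x).

Definition quadrant (p : R * R) : Prop := 0 <= fst p /\ 0 <= snd p.

Definition maps_into (f : R * R -> R * R) (A : R * R -> Prop) : Prop :=
  forall p, A p -> A (f p).

Definition A_plus (A : R * R -> Prop) (p : R * R) : Prop := A p /\ quadrant p.

(* Main.v *)
Require Import Defs.
From Stdlib Require Import Reals Lra.
Open Scope R_scope.

(* E_sigma^{-1}(A_+) = A_+, preimage taken in the domain R_{>=0}^2 of E_sigma. *)
Theorem lemma9 (sigma sinv : R -> R) (A : R * R -> Prop) :
  increasing_odd_homeo sigma sinv ->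
  maps_into (h_sig sigma sinv) A ->
  maps_into (h_sig_inv sigma sinv) A ->
  maps_into (v_sig sigma sinv) A ->
  maps_into (v_sig_inv sigma sinv) A ->
  forall p : R * R,
    (quadrant p /\ A_plus A (E_sig sigma sinv p)) <-> A_plus A p.
Proof.
  intros [Hinc [_ [_ [_ [H1 H2]]]]] Hh Hhi Hv Hvi [x y].
  unfold A_plus, quadrant, E_sig, maps_into in *; simpl in *.
  destruct (Rlt_dec y (sigma x)) as [Hl|Hl]; simpl.
  - assert (sinv y < x).
    { destruct (Rlt_or_le (sinv y) x) as [h|h]; auto.
      destruct h as [h|h].
      + apply Hinc in h. rewrite H2 in h. lra.
      + rewrite h, H2 in Hl. lra. }
    split.
    + intros [[Hq1 Hq2] [HA _]]. split; [|lra].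
      specialize (Hh _ HA). unfold h_sig in Hh; simpl in Hh.
      replace (x - sinv y + sinv y) with x in Hh by ring. exact Hh.
    + intros [HA Hq]. split; [exact Hq|]. split; [|lra].
      exact (Hhi _ HA).
  - split.
    + intros [[Hq1 Hq2] [HA _]]. split; [|lra].
      specialize (Hv _ HA). unfold v_sig in Hv; simpl in Hv.
      replace (sigma x + (y - sigma x)) with y in Hv by ring. exact Hv.
    + intros [HA Hq]. split; [exact Hq|]. split; [|lra].
      exact (Hvi _ HA).
Qed.
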